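(* For every $x\in\Delta\setminus\partial\Delta$, $p(x)=\nabla H\cdot F(x)=2\sum_{i,j\in\mathbb{V}:\,x_{ij}>0}x_{ij}\big(y_{ij}-N_i(x)\big)^2$, where $N_i(x)=\sum_{k:\,x_{ik}>0}\frac{x_{ik}}{x_i}y_{ik}$ and $p(x)=\sum_{i,j,k:\,x_{ij},x_{ik}>0}\frac{x_{ij}x_{ik}}{x_i}(y_{ij}-y_{ik})^2$.
   Context: Let $G=(\mathbb{V},E)$ be a finite graph with adjacency $\sim$. Let $a_{ij}=a_{ji}\ge0$ ($>0$ only if $i\sim j$) and $p_{ij}=p_{ji}\in[0,1]$ ($=0$ if $i\not\sim j$), with some $a_{ij}p_{ij}>0$. Fix $h_1\in(0,1]$; $\Delta$ is the set of arrays $x=(x_{ij})$ with $x_{ij}=x_{ji}\ge0$, $x_{ij}=0$ if $i\not\sim j$, $\sum_{i,j}x_{ij}=1$, $\sum_{(i,j):a_{ij}p_{ij}>0}x_{ij}\ge h_1$; $x_i=\sum_jx_{ij}$. $\partial\Delta$: the $x\in\Delta$ such that some vertex $i$ having a neighbour $j$ with $a_{ij}p_{ij}>0$ has $\sum_{j:a_{ij}p_{ij}>0}x_{ij}=0$. $H(x)=\sum_{(i,j):x_{ij}>0}a_{ij}p_{ij}x_{ij}^2/(x_ix_j)$; $y_{ij}=a_{ij}p_{ij}x_{ij}/(x_ix_j)$ ($0$ if $a_{ij}p_{ij}=0$); $F(x)_{ij}=x_{ij}(y_{ij}-H(x))$ ($0$ if $x_{ij}=0$). $\nabla H\cdot F=\sum_{i,j}\frac{\partial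 H}{\partial x_{ij}}F_{ij}$, with $H$ regarded as a function of the ordered-pair variables $x_{ij}$ ($x_{ij},x_{ji}$ independent, $x_i=\sum_jx_{ij}$). *)

(* Defs.v *)
From HB Require Import structures.
From mathcomp Require Import all_boot all_order all_algebra.
From mathcomp Require Import all_classical all_reals all_analysis.
Set Implicit Arguments. Unset Strict Implicit. Unset Printing Implicit Defensive.
Import Order.TTheory GRing.Theory Num.Theory.
Local Open Scope ring_scope.

Section Defs.
Variables (R : realType) (V : finType).
Implicit Types (x : V -> V -> R) (a p : V -> V -> R).

Definition xv x (i : V) : R := \sum_(j : V) x i j.

Definition Hf a p x : R :=
  \sum_(i : V) \sum_(j : V | 0 < x i j)
     a i j * p i j * x i j ^+ 2 / (xv x i * xv x j).

Definition yf a p x (i j : V) : R :=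
  if a i j * p i j == 0 then 0 else a i j * p i j * x i j / (xv x i * xv x j).

Definition Ff a p x (i j : V) : R :=
  if x i j == 0 then 0 else x i j * (yf a p x i j - Hf a p x).

Definition bump x (i j : V) (t : R) : V -> V -> R :=
  fun k l => if (k == i) && (l == j) then x k l + t else x k l.

(* partial derivative of H with respect to the ordered-pair variable x_ij,
   all x_kl (including x_ji) treated as independent, x_k = sum_l x_kl *)
Definition dH a p x (i j : V) : R :=
  derive1 (fun t : R => Hf a p (bump x i j t)) 0.

Definition gradH_dot_F a p x : R :=
  \sum_(i : V) \sum_(j : V) dH a p x i j * Ff a p x i j.

Definition Nf a p x (i : V) : R :=
  \sum_(k : V | 0 < x i k) x i k / xv x i * yf a p x i k.

Definition pf a p x : R :=
  \sum_(i : V) \sum_(j : V | 0 < x i j) \sum_(k : V | 0 < x i k)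
     x i j * x i k / xv x i * (yf a p x i j - yf a p x i k) ^+ 2.

Definition in_Delta (adj : rel V) a p (h1 : R) x : Prop :=
  [/\ (forall i j, x i j = x j i),
      (forall i j, 0 <= x i j),
      (forall i j, ~~ adj i j -> x i j = 0),
      \sum_(i : V) \sum_(j : V) x i j = 1 &
      h1 <= \sum_(i : V) \sum_(j : V | 0 < a i j * p i j) x i j].

Definition in_bDelta a p x : Prop :=
  exists i : V, (exists j : V, 0 < a i j * p i j) /\
                \sum_(j : V | 0 < a i j * p i j) x i j = 0.

End Defs.

(* Main.v *)
Require Import Defs.
From HB Require Import structures.
From mathcomp Require Import all_boot all_order all_algebra.
From mathcomp Require Import all_classical all_reals all_analysis.
From mathcomp Require Import ring lra.
Import Order.TTheory GRing.Theory Num.Theory.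
Local Open Scope ring_scope.

Section S.
Variable R : realType.

Lemma is_derive_lin (u al : R) (t0 : R) :
  is_derive t0 1 (fun t : R => u + al * t) al.
Proof.
have H := is_deriveD (is_derive_cst u t0 1) (is_deriveZ al (is_derive_id t0 (1:R))).
rewrite add0r in H. eapply is_derive_eq. exact H.
exact: mulr1.
Qed.

Lemma is_derive_term (c u v w al be ga : R) :
  v * w != 0 ->
  is_derive (0:R) 1 (fun t : R => c * (u + al * t) ^+ 2 / ((v + be * t) * (w + ga * t)))
    (c * (2 * al * u / (v * w) - u ^+ 2 * (be * w + ga * v) / (v * w) ^+ 2)).
Proof.
move=> vw0.
have H1 := is_deriveZ c (is_deriveX 2 (is_derive_lin u al 0)).
have H2 := is_deriveM (is_derive_lin v be 0) (is_derive_lin w ga 0).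
have H3 := is_deriveV (f := (fun t : R => v + be * t) * (fun t : R => w + ga * t)) _ H2.
have H0 : ((fun t : R => v + be * t) * (fun t : R => w + ga * t)) 0 != 0.
  by rewrite !fctE /= !mulr0 !addr0.
have H4 := is_deriveM H1 (H3 H0).
eapply is_derive_eq. exact H4.
rewrite /GRing.scale /= !mulr0 !addr0.
rewrite !fctE /= /GRing.scale /= !mulr0 !addr0.
move: vw0; rewrite mulf_eq0 negb_or => /andP[va wa].
clear -va wa. field; by rewrite va wa.
Qed.

Lemma is_derive_big (I : Type) (r : seq I) (P : pred I) (h : I -> R -> R) (dh : I -> R) :
 (forall i, P i -> is_derive (0:R) 1 (h i) (dh i)) ->
 is_derive (0:R) 1 (fun t => \sum_(i <- r | P i) h i t) (\sum_(i <- r | P i) dh i).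
Proof.
move=> H; elim: r => [|i r IH].
  have -> : (fun t : R => \sum_(i <- [::] | P i) h i t) = (fun t => 0).
    by apply/funext => t; rewrite big_nil.
  rewrite big_nil; exact: (is_derive_cst (0:R) (0:R) 1).
case: (boolP (P i)) => Pi.
  have -> : (fun t : R => \sum_(j <- i :: r | P j) h j t) =
     (fun t => h i t + \sum_(j <- r | P j) h j t).
    by apply/funext => t; rewrite big_cons Pi.
  eapply is_derive_eq. exact (is_deriveD (H i Pi) IH).
  by rewrite big_cons Pi.
have -> : (fun t : R => \sum_(j <- i :: r | P j) h j t) =
     (fun t => \sum_(j <- r | P j) h j t).
  by apply/funext => t; rewrite big_cons (negbTE Pi).
by rewrite big_cons (negbTE Pi).
Qed.

Variable V : finType.

Lemma sum_ind1 (P : pred V) (f : V -> R) (l : V) : P l ->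
  \sum_(j | P j) (j == l)%:R * f j = f l.
Proof.
move=> Pl; rewrite (bigD1 l) //= eqxx mul1r big1 ?addr0 //.
by move=> j /andP[_ /negbTE ->]; rewrite mul0r.
Qed.

Lemma sum_ind1' (P : pred V) (f : V -> R) (l : V) :
  \sum_(j | P j) (j == l)%:R * f j = if P l then f l else 0.
Proof.
case: (boolP (P l)) => Pl; first exact: sum_ind1.
rewrite big1 // => j Pj; case: (eqVneq j l) => [jl|]; last by rewrite mul0r.
by move: Pj Pl; rewrite jl => ->.
Qed.

Lemma aux_grad (P : pred V) (w y : V -> R) (s N Hc : R) :
  \sum_(j | P j) w j = s -> s * N = \sum_(j | P j) w j * y j ->
  \sum_(j | P j) (2 * y j - 2 * N) * (w j * (y j - Hc)) =
  2 * \sum_(j | P j) w j * (y j - N) ^+ 2.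
Proof.
move=> Hs HN.
have E : \sum_(j | P j) w j * (y j - N) = 0.
  under eq_bigr do rewrite mulrBr.
  by rewrite sumrB -mulr_suml Hs HN subrr.
rewrite mulr_sumr; apply/eqP; rewrite -subr_eq0 -sumrB.
rewrite (eq_bigr (fun j => w j * (y j - N) * (2 * (N - Hc)))); last by move=> j _; ring.
by rewrite -mulr_suml E mul0r.
Qed.

Lemma aux_p (P : pred V) (w y : V -> R) (s N : R) :
  (forall j, P j -> 0 < w j) ->
  \sum_(j | P j) w j = s -> s * N = \sum_(j | P j) w j * y j ->
  \sum_(j | P j) \sum_(k | P k) w j * w k / s * (y j - y k) ^+ 2 =
  2 * \sum_(j | P j) w j * (y j - N) ^+ 2.
Proof.
move=> wpos Hs HN.
case: (boolP [exists j, P j]) => [/existsP[j0 Pj0]|/existsPn nP]; last first.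
  by rewrite !big1 ?mulr0 // => j Pj; have := nP j; rewrite Pj.
have s0 : s != 0.
  rewrite -Hs; apply/lt0r_neq0; rewrite (bigD1 j0) //=.
  apply: ltr_pwDl; first exact: wpos.
  by apply: sumr_ge0 => j /andP[Pj _]; apply/ltW/wpos.
set A := \sum_(j | P j) w j * y j ^+ 2.
set B := \sum_(j | P j) w j * y j.
have HN' : N = B / s.
  by rewrite /B -HN mulrC mulKf.
transitivity (\sum_(j | P j) (w j * y j ^+ 2 + (w j * y j) * (-2 * B / s) + w j * (A / s))).
  apply: eq_bigr => j Pj.
  rewrite (eq_bigr (fun k => w j / s * (y j ^+ 2 * w k + (-2 * y j) * (w k * y k) + w k * y k ^+ 2))); last by move=> k _; ring.
  rewrite -mulr_sumr !big_split /= -!mulr_sumr Hs.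
  rewrite -/A -/B. by field.
rewrite !big_split /= -!mulr_suml.
rewrite [in RHS](eq_bigr (fun j => w j * y j ^+ 2 + (w j * y j) * (-2 * N) + w j * N ^+ 2)); last by move=> j _; ring.
rewrite !big_split /= -!mulr_suml -/A -/B Hs HN'.
by field.
Qed.

Variables (a p x : V -> V -> R).
Hypothesis xsym : forall i j, x i j = x j i.
Hypothesis xge0 : forall i j, 0 <= x i j.

Lemma x_le_xv i j : x i j <= xv x i.
Proof.
rewrite /xv (bigD1 j) //= lerDl; exact: sumr_ge0.
Qed.

Lemma xv_gt0 i j : 0 < x i j -> 0 < xv x i.
Proof. by move=> h; apply: lt_le_trans h (x_le_xv i j). Qed.

Lemma xv_gt0' i j : 0 < x i j -> 0 < xv x j.
Proof. by rewrite xsym; apply: xv_gt0. Qed.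

Lemma yfE i j : yf a p x i j = a i j * p i j * x i j / (xv x i * xv x j).
Proof. by rewrite /yf; case: eqP => // ->; rewrite !mul0r. Qed.

Hypothesis a_sym : forall i j, a i j = a j i.
Hypothesis p_sym : forall i j, p i j = p j i.

Lemma yf_sym i j : yf a p x i j = yf a p x j i.
Proof. by rewrite !yfE a_sym p_sym xsym [xv x j * _]mulrC. Qed.

Lemma bumpE (k l : V) (t : R) (i j : V) :
  Defs.bump x k l t i j = x i j + (i == k)%:R * (j == l)%:R * t.
Proof.
rewrite /Defs.bump; case: (eqVneq i k) => [->|]; case: (eqVneq j l) => [->|] //=;
  by rewrite ?mulr0 ?mul0r ?addr0 ?mul1r.
Qed.

Lemma xv_bump (k l : V) (t : R) (i : V) : xv (Defs.bump x k l t) i = xv x i + (i == k)%:R * t.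
Proof.
rewrite /xv; under eq_bigr do rewrite bumpE.
rewrite big_split /=; congr (_ + _).
under eq_bigr do rewrite -mulrA.
rewrite -mulr_sumr sum_ind1 //.
Qed.

Lemma sum_pos i : \sum_(j | 0 < x i j) x i j = xv x i.
Proof.
rewrite /xv [in RHS](bigID (fun j => 0 < x i j)) /= [X in _ = _ + X]big1 ?addr0 //.
by move=> j; rewrite lt_neqAle xge0 andbT negbK => /eqP <-.
Qed.

Lemma xvN i : xv x i * Nf a p x i = \sum_(j | 0 < x i j) x i j * yf a p x i j.
Proof.
rewrite /Nf mulr_sumr; apply: eq_bigr => j hj.
have := xv_gt0 _ _ hj; rewrite lt0r => /andP[h _].
by rewrite mulrA [xv x i * _]mulrC divfK.
Qed.

Lemma dH_val (k l : V) : 0 < x k l ->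
  dH a p x k l = 2 * yf a p x k l - 2 * Nf a p x k.
Proof.
move=> hkl.
rewrite /dH derive1E.
pose G := fun t : R => \sum_(i : V) \sum_(j : V | 0 < x i j)
   a i j * p i j * (x i j + (i == k)%:R * (j == l)%:R * t) ^+ 2 /
   ((xv x i + (i == k)%:R * t) * (xv x j + (j == k)%:R * t)).
rewrite (@near_eq_derive _ _ _ _ G (0:R) 1); last first.
  near=> t.
  have ht : `|t| < x k l.
    near: t. exact: (@nbhs0_lt R R _ hkl).
  rewrite /Hf /G; apply: eq_bigr => i _.
  rewrite (eq_bigl (fun j => 0 < x i j)); last first.
    move=> j; rewrite /Defs.bump; case: ifP => // /andP[/eqP -> /eqP ->].
    rewrite hkl; move: ht; rewrite ltr_norml => /andP[h1 _].
    by rewrite -ltrBlDl sub0r.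
  by apply: eq_bigr => j _; rewrite bumpE !xv_bump.
have D : is_derive (0:R) 1 G (\sum_(i : V) \sum_(j : V | 0 < x i j)
   a i j * p i j * (2 * ((i == k)%:R * (j == l)%:R) * x i j / (xv x i * xv x j) -
     x i j ^+ 2 * ((i == k)%:R * xv x j + (j == k)%:R * xv x i) / (xv x i * xv x j) ^+ 2)).
  apply: is_derive_big => i _.
  apply: is_derive_big => j hj.
  apply: is_derive_term.
  by rewrite mulf_neq0 // lt0r_neq0 //; [apply: (xv_gt0 _ _ hj)|apply: (xv_gt0' _ _ hj)].
rewrite derive_val.
transitivity (\sum_(i : V) \sum_(j : V | 0 < x i j)
  ((i == k)%:R * ((j == l)%:R * (2 * yf a p x i j)) -
   (i == k)%:R * (x i j / xv x i * yf a p x i j) -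
   (j == k)%:R * (x i j / xv x j * yf a p x i j))).
  apply: eq_bigr => i _; apply: eq_bigr => j hj.
  have h1 := lt0r_neq0 (xv_gt0 _ _ hj).
  have h2 := lt0r_neq0 (xv_gt0' _ _ hj).
  rewrite yfE; field.
  by rewrite h1 h2.
under eq_bigr do rewrite !sumrB.
rewrite !sumrB.
have T1 : \sum_(i : V) \sum_(j : V | 0 < x i j)
    (i == k)%:R * ((j == l)%:R * (2 * yf a p x i j)) = 2 * yf a p x k l.
  under eq_bigr do rewrite -mulr_sumr.
  by rewrite sum_ind1 // sum_ind1.
have T2 : \sum_(i : V) \sum_(j : V | 0 < x i j)
    (i == k)%:R * (x i j / xv x i * yf a p x i j) = Nf a p x k.
  under eq_bigr do rewrite -mulr_sumr.
  by rewrite sum_ind1.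
have T3 : \sum_(i : V) \sum_(j : V | 0 < x i j)
    (j == k)%:R * (x i j / xv x j * yf a p x i j) = Nf a p x k.
  under eq_bigr do rewrite sum_ind1'.
  rewrite -big_mkcond /= /Nf; apply: eq_big => i; first by rewrite xsym.
  by move=> _; rewrite xsym yf_sym.
rewrite T1 T2 T3; ring.
Unshelve. all: by end_near.
Qed.
End S.
Theorem lemma2 (R : realType) (V : finType) (adj : rel V)
  (a p : V -> V -> R) (h1 : R)
  (adj_sym : forall i j, adj i j = adj j i)
  (a_sym : forall i j, a i j = a j i)
  (a_ge0 : forall i j, 0 <= a i j)
  (a_adj : forall i j, 0 < a i j -> adj i j)
  (p_sym : forall i j, p i j = p j i)
  (p_01 : forall i j, 0 <= p i j <= 1)
  (p_adj : forall i j, ~~ adj i j -> p i j = 0)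
  (ap_pos : exists i j, 0 < a i j * p i j)
  (h1_01 : 0 < h1 <= 1)
  (x : V -> V -> R)
  (xD : in_Delta adj a p h1 x) (xnb : ~ in_bDelta a p x) :
  pf a p x = gradH_dot_F a p x /\
  gradH_dot_F a p x =
    2 * \sum_(i : V) \sum_(j : V | 0 < x i j) x i j * (yf a p x i j - Nf a p x i) ^+ 2.
Proof.
case: xD => xsym xge0 _ _ _.
have Hgrad : gradH_dot_F a p x =
    2 * \sum_(i : V) \sum_(j : V | 0 < x i j) x i j * (yf a p x i j - Nf a p x i) ^+ 2.
  rewrite /gradH_dot_F mulr_sumr; apply: eq_bigr => i _.
  rewrite [LHS](bigID (fun j => 0 < x i j)) /= [X in _ + X]big1 ?addr0; last first.
    move=> j; rewrite lt_neqAle xge0 andbT negbK => /eqP hx.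
    by rewrite /Ff -hx eqxx mulr0.
  rewrite (eq_bigr (fun j => (2 * yf a p x i j - 2 * Nf a p x i) *
                          (x i j * (yf a p x i j - Hf a p x)))); last first.
    move=> j hj; rewrite (dH_val _ _ _ _ _ xsym xge0 a_sym p_sym _ _ hj) /Ff.
    by rewrite (negbTE (lt0r_neq0 hj)).
  apply: aux_grad; first exact: (sum_pos _ _ _ xge0).
  exact: (xvN _ _ _ _ _ xge0).
split; last exact Hgrad.
rewrite Hgrad /pf mulr_sumr; apply: eq_bigr => i _.
apply: aux_p => //; first exact: (sum_pos _ _ _ xge0).
exact: (xvN _ _ _ _ _ xge0).
Qed.
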